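(* Let $\Omega\subseteq\mathbb{R}^{m\times m}$ and let $d:\Omega^2\to\mathbb{R}$ be a pseudometric. Let $n\ge 2$ and define the Fermat distance function induced by $d$ as the map $d_F:\Omega^n\to\mathbb{R}$, $$d_F(A_1,\dots,A_n)=\min_{B\in\Omega}\sum_{i=1}^n d(A_i,B).$$ Then $d_F$ is a pseudo $n$-metric.
   Context: A pseudometric on $\Omega$ is a map $d:\Omega^2\to\mathbb{R}$ with $d(A,B)\ge 0$, $d(A,A)=0$, $d(A,B)=d(B,A)$ and $d(A,C)\le d(A,B)+d(B,C)$ for all $A,B,C\in\Omega$. Notation: $A_{1:n}=(A_1,\dots,A_n)$; for $A_{n+1}\in\Omega$, $A^i_{1:n,n+1}$ denotes the sequence $A_{1:n}$ with its $i$-th entry $A_i$ replaced by $A_{n+1}$; for a permutation $\sigma$ of $\{1,\dots,n\}$, $A_{\sigma(1:n)}$ is the sequence whose $i$-th entry is $A_{\sigma(i)}$. A map $D:\Omega^n\to\mathbb{R}$ is a pseudo $n$-metric if for all $A_1,\dots,A_{n+1}\in\Omega$ and all permutations $\sigma$: (1) $D(A_{1:n})\ge 0$; (2) $D(A_{1:n})=D(A_{\sigma(1:n)})$; (3) $D(A_{1:n})\le\sum_{i=1}^n D(A^i_{1:n,n+1})$ (generalized triangle inequality); (4) $D(A,\dots,A)=0$ for all $A\in\Omega$ (self-identity). *)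

(* Defs.v *)
From HB Require Import structures.
From mathcomp Require Import all_boot all_order all_algebra all_fingroup.
From mathcomp Require Import classical_sets reals.
Set Implicit Arguments. Unset Strict Implicit. Unset Printing Implicit Defensive.
Import Order.TTheory GRing.Theory Num.Theory.
Local Open Scope classical_set_scope.
Local Open Scope ring_scope.

Section Defs.
Variable R : realType.
Variable T : Type.

Definition pseudometric_on (Om : set T) (d : T -> T -> R) : Prop :=
  forall A B C, Om A -> Om B -> Om C ->
    [/\ 0 <= d A B, d A A = 0, d A B = d B A & d A C <= d A B + d B C].

Definition replace_at (n : nat) (A : 'I_n -> T) (i : 'I_n) (A' : T) : 'I_n -> T :=
  fun j => if j == i then A' else A j.

Definition pseudo_n_metric_on (n : nat) (Om : set T) (D : ('I_n -> T) -> R) : Prop :=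
  (forall A : 'I_n -> T, (forall i, Om (A i)) -> 0 <= D A) /\
  (forall (A : 'I_n -> T) (s : 'S_n), (forall i, Om (A i)) ->
      D A = D (fun i => A (s i))) /\
  (forall (A : 'I_n -> T) (A' : T), (forall i, Om (A i)) -> Om A' ->
      D A <= \sum_(i < n) D (replace_at A i A')) /\
  (forall X, Om X -> D (fun _ => X) = 0).

(* Fermat distance: the infimum over B in Om of sum_i d(A_i, B)
   (equal to the minimum whenever it is attained). *)
Definition fermat_dist (n : nat) (Om : set T) (d : T -> T -> R) (A : 'I_n -> T) : R :=
  inf [set (\sum_(i < n) d (A i) B) | B in Om].
End Defs.

(* Main.v *)
Require Import Defs.
From mathcomp Require Import all_boot all_order all_algebra all_fingroup.
From mathcomp Require Import classical_sets reals.
Set Implicit Arguments. Unset Strict Implicit. Unset Printing Implicit Defensive.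
Import Order.TTheory GRing.Theory Num.Theory.
Local Open Scope classical_set_scope.
Local Open Scope ring_scope.

Section Aux.
Variable R : realType.
Variable T : Type.
Variables (Om : set T) (d : T -> T -> R).
Hypothesis hd : pseudometric_on Om d.

Lemma E_lb n (A : 'I_n -> T) : (forall i, Om (A i)) ->
  lbound [set (\sum_(i < n) d (A i) B) | B in Om] 0.
Proof.
move=> HA x [B HB <-]; apply: sumr_ge0 => i _.
by have [] := hd (HA i) HB HB.
Qed.

Lemma fd_le n (A : 'I_n -> T) B : (forall i, Om (A i)) -> Om B ->
  fermat_dist Om d A <= \sum_(i < n) d (A i) B.
Proof.
move=> HA HB; apply: ge_inf; last by exists B.
by exists 0; apply: E_lb.
Qed.

Lemma fd_ge0 n (A : 'I_n -> T) B : (forall i, Om (A i)) -> Om B ->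
  0 <= fermat_dist Om d A.
Proof.
move=> HA HB; apply: lb_le_inf; first by exists (\sum_(i < n) d (A i) B), B.
exact: E_lb.
Qed.

Lemma ordS_neq n (j : 'I_n) : (2 <= n)%N -> ordS j != j.
Proof.
move=> n2; apply/eqP => /(congr1 val) /=.
have jn := ltn_ord j.
case: (ltnP j.+1 n) => h.
  by rewrite modn_small //; move/eqP; rewrite eqn_leq ltnn.
have -> : j.+1 = n by apply/eqP; rewrite eqn_leq h jn.
rewrite modnn => j0.
have : j.+1 = n by apply/eqP; rewrite eqn_leq h jn.
by rewrite -j0 => h1; rewrite -h1 in n2.
Qed.

End Aux.

Theorem theorem1 (R : realType) (m n : nat) (Om : set 'M[R]_m)
    (d : 'M[R]_m -> 'M[R]_m -> R) :
  pseudometric_on Om d -> (2 <= n)%N ->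
  pseudo_n_metric_on Om (fermat_dist Om d (n:=n)).
Proof.
move=> hd n2.
have i0 : 'I_n by exists 0%N; apply: leq_trans n2.
split; [|split; [|split]].
- by move=> A HA; apply: (fd_ge0 hd HA (HA i0)).
- move=> A s HA; rewrite /fermat_dist.
  suff -> : [set (\sum_(i < n) d (A i) B) | B in Om] =
            [set (\sum_(i < n) d (A (s i)) B) | B in Om] by [].
  apply/seteqP; split => x [B HB <-]; exists B => //.
    exact/esym/(reindex_inj (@perm_inj _ s)).
  exact: (reindex_inj (@perm_inj _ s)).
- move=> A A' HA HA'.
  set D := fermat_dist Om d (n:=n).
  have HAi : forall i j, Om (replace_at A i A' j).
    by move=> i j; rewrite /replace_at; case: eqP.
  have npos : 0 < n%:R :> R by rewrite ltr0n; apply: leq_trans n2.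
  apply/ler_addgt0Pr => e e0.
  have ee0 : 0 < e / n%:R by rewrite divr_gt0.
  have : forall i, exists2 B, Om B &
      \sum_(j < n) d (replace_at A i A' j) B < D (replace_at A i A') + e / n%:R.
    move=> i; rewrite /D /fermat_dist.
    have [|x [B HB <-] He] := @inf_adherent _
      [set (\sum_(j < n) d (replace_at A i A' j) B) | B in Om] _ ee0.
      split; first by exists (\sum_(j < n) d (replace_at A i A' j) A'), A'.
      by exists 0; apply: E_lb.
    by exists B.
  case/fin_all_exists2 => B HB HBl.
  apply: (le_trans (fd_le hd HA HA')).
  apply: (@le_trans _ _ (\sum_(i < n) \sum_(j < n) d (replace_at A i A' j) (B i))).
    rewrite [in X in _ <= X](reindex_inj (@ordS_inj n)).
    apply: ler_sum => j _.
    set k := ordS j.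
    have kj : k != j by apply: ordS_neq.
    rewrite (bigD1 k) //= (bigD1 j) /=; last by rewrite eq_sym.
    rewrite /replace_at eqxx eq_sym (negbTE kj).
    have [_ _ sym tri] := hd _ _ _ (HA j) (HB k) HA'.
    apply: (le_trans tri); rewrite addrCA lerD2l.
    have [_ _ s2 _] := hd _ _ _ HA' (HB k) HA'.
    rewrite -s2 lerDl; apply: sumr_ge0 => l _.
    by have [] := hd _ _ _ (HAi k l) (HB k) (HB k).
  apply: (@le_trans _ _ (\sum_(i < n) (D (replace_at A i A') + e / n%:R))).
    by apply: ler_sum => i _; apply: ltW.
  rewrite big_split /= sumr_const card_ord -(mulr_natr (e / n%:R)) divfK //.
  by rewrite gt_eqF.
- move=> X HX; apply/eqP; rewrite eq_le; apply/andP; split.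
    apply: (le_trans (fd_le hd (fun _ => HX) HX)).
    by rewrite big1 // => i _; have [] := hd _ _ _ HX HX HX.
  exact: (fd_ge0 hd (fun _ => HX) HX).
Qed.
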